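(* Let $\sigma$ be a positive finite Borel measure on $\partial\mathbb D$ and $u$ its Poisson integral, $u(z)=\int_{\partial\mathbb D}\frac{1-|z|^2}{|\xi-z|^2}d\sigma(\xi)$. Suppose there is $\varepsilon\in(0,1)$ such that $\sigma(2I)\le2(1+\varepsilon)\sigma(I)$ for every arc $I\subset\partial\mathbb D$. Then there is $c=c(\varepsilon)>0$ such that $\frac{\sigma(I)}{|I|}\ge c\,u(z_I)$ for every arc $I\subset\partial\mathbb D$.
   Context: $m$ is normalized Lebesgue measure on $\partial\mathbb D$, $|I|=m(I)$; $2I$ is the arc with the same center as $I$ and length $2|I|$ (the whole circle if $2|I|\ge1$); $z_I=(1-|I|)\xi_I$ with $\xi_I$ the center of $I$. *)

(* Defs.v *)
(* The unit circle is parametrized by t |-> e^{2 pi i t},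
   t in [0,1); normalized Lebesgue measure of an arc is its parameter length. *)
From HB Require Import structures.
From mathcomp Require Import all_boot all_order all_algebra.
From mathcomp Require Import all_classical all_reals all_analysis.
Set Implicit Arguments. Unset Strict Implicit. Unset Printing Implicit Defensive.
Import Order.TTheory GRing.Theory Num.Theory.
Local Open Scope classical_set_scope.
Local Open Scope ring_scope.

(* The closed arc of the circle { e^{2 pi i t} : a <= t <= a + l }, seen as the
   (1-periodic) set of its parameters t in R.  For l >= 1 it is the whole circle. *)
Definition circ_arc (R : realType) (a l : R) : set R :=
  [set t : R | exists k : int, a <= t + k%:~R <= a + l].

(* 2I : same center a + l/2, length 2l (whole circle if 2l >= 1). *)
Definition circ_arc2 (R : realType) (a l : R) : set R := circ_arc (a - l / 2) (2 * l).

(* Poisson kernel P(z, xi) = (1-|z|^2)/|xi - z|^2 with z = r e^{2 pi i c},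
   xi = e^{2 pi i t}. *)
Definition poisson_kernel (R : realType) (r c t : R) : R :=
  (1 - r ^+ 2) / (1 - 2 * r * cos (2 * pi * (t - c)) + r ^+ 2).

(* u(z_I) for the arc I = arc a l: z_I = (1 - l) xi_I, xi_I = e^{2 pi i (a + l/2)}. *)
Definition poisson_at_zI (R : realType) (mu : {measure set R -> \bar R}) (a l : R)
  : \bar R :=
  (\int[mu]_t (poisson_kernel (1 - l) (a + l / 2) t)%:E)%E.

(* Main.v *)
Require Import Defs.
From HB Require Import structures.
From mathcomp Require Import all_boot all_order all_algebra.
From mathcomp Require Import all_classical all_reals all_analysis.
From mathcomp Require Import measurable_realfun.
From mathcomp Require Import ring lra.
Import Order.TTheory GRing.Theory Num.Theory.
Import numFieldNormedType.Exports.
Local Open Scope classical_set_scope.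
Local Open Scope ring_scope.

Lemma sin_lin (R : realType) (y : R) : 0 <= y <= 1 -> y * cos 1 <= sin y.
Proof.
move=> /andP[y0 y1].
have cs : {within `[0, y], continuous (@sin R)}.
  exact/continuous_subspaceT/continuous_sin.
have [z /itvP zI] := @MVT_segment R sin cos 0 y y0 (fun x _ => is_derive_sin x) cs.
rewrite sin0 subr0 => ->.
rewrite [leRHS]mulrC subr0; apply: ler_wpM2l => //.
have pi1 : (1:R) <= pi by apply: le_trans (pi_ge2 R); rewrite ler1n.
rewrite leNgt (ltr_cos (x := 1) (y := z)) ?in_itv/= ?pi1 ?ler01 ?zI //.
  by rewrite -leNgt (le_trans _ y1) ?zI.
by rewrite (le_trans _ pi1) ?(le_trans _ y1) ?zI.
Qed.

Lemma one_sub_cos_pos (R : realType) (y : R) : 0 <= y -> y <= pi ->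
  cos 1 ^+ 2 / 16 * y ^+ 2 <= 1 - cos y.
Proof.
move=> y0 yp.
have c1 : 0 < cos 1 :> R := cos1_gt0 R.
have c1' : cos 1 <= 1 :> R := cos_le1 1.
have pi4 : pi < 4 :> R.
  by have := pihalf_lt2 R; rewrite ltr_pdivrMr // => /lt_le_trans; apply; rewrite -natrM.
have [y2|y2] := lerP y 2.
  have hs := @sin_lin R (y / 2).
  have e : cos y = 1 - 2 * sin (y/2) ^+ 2.
    have -> : cos y = cos ((y/2) *+ 2) by rewrite -mulr_natr divfK.
    rewrite cos_mulr2n mulr2n cos2sin2; lra.
  rewrite e.
  have h : y / 2 * cos 1 <= sin (y / 2).
    apply: hs; apply/andP; split; lra.
  have h0 : 0 <= y / 2 * cos 1 by apply: mulr_ge0 => //; lra.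
  nra.
have hc : cos y < cos 2.
  rewrite (ltr_cos (x := 2) (y := y)) // ?in_itv /= ?yp ?y0 //.
  by rewrite pi_ge2 ler0n.
have := cos2_lt0 R.
have hc1 : cos 1 ^+ 2 <= 1 :> R by rewrite expr2; nra.
have hy : y ^+ 2 <= 16 by rewrite expr2; nra.
have : cos 1 ^+ 2 * y ^+ 2 <= 16.
  have hc0 : 0 <= cos 1 ^+ 2 :> R by exact: sqr_ge0.
  have hy0 : 0 <= y ^+ 2 by exact: sqr_ge0.
  nra.
lra.
Qed.

Lemma one_sub_cos (R : realType) (x : R) : -pi <= x <= pi ->
  cos 1 ^+ 2 / 16 * x ^+ 2 <= 1 - cos x.
Proof.
move=> /andP[x1 x2].
have [x0|x0] := leP 0 x; first exact: one_sub_cos_pos.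
have h1 : 0 <= - x by lra.
have h2 : - x <= pi by lra.
have := @one_sub_cos_pos R (- x) h1 h2.
by rewrite sqrrN cosN.
Qed.

Lemma cos_addint (R : realType) (x : R) (m : int) :
  cos (x + 2 * pi * m%:~R) = cos x.
Proof.
have P := periodicn (@cosD2pi R).
have E k : 2 * pi * k%:R = pi *+ 2 *+ k :> R by rewrite mulr_natl mulr_natr.
case: m => n.
  by rewrite pmulrn E P.
rewrite -(P n.+1 (x + 2 * pi * (Negz n)%:~R)) -E; congr cos.
rewrite NegzE mulrN pmulrn; ring.
Qed.

Lemma arc_setT (R : realType) (a L : R) : 1 <= L -> circ_arc a L = setT.
Proof.
move=> L1; apply/seteqP; split => // t _.
exists (- Num.floor (t - a)); rewrite intrN.
have h1 := floor_le (t - a).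
have h2 := floorD1_gt (t - a).
rewrite intrD in h2.
apply/andP; split; lra.
Qed.

Lemma arc_meas (R : realType) (a L : R) : measurable (circ_arc a L).
Proof.
have -> : circ_arc a L = \bigcup_(k : int) `[a - k%:~R, a + L - k%:~R]%classic.
  apply/seteqP; split => t.
    move=> [k hk]; exists k => //=; rewrite in_itv /=.
    move: hk => /andP[h1 h2]; apply/andP; split; lra.
  move=> [k _]; rewrite /= in_itv /= => /andP[h1 h2]; exists k.
  apply/andP; split; lra.
apply: countable_bigcupT_measurable; first exact: countableP.
move=> k; exact: measurable_itv.
Qed.

Lemma pk_den (R : realType) (r c t : R) : 0 <= r ->
  (1 - r) ^+ 2 + 2 * r * (1 - cos (2 * pi * (t - c))) =
  1 - 2 * r * cos (2 * pi * (t - c)) + r ^+ 2.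
Proof. move=> _; ring. Qed.

Lemma pk_bound0 (R : realType) (l c t : R) : 0 < l -> l <= 1 ->
  0 <= poisson_kernel (1 - l) c t <= 2 / l.
Proof.
move=> l0 l1; rewrite /poisson_kernel.
rewrite -pk_den; last lra.
set co := cos _.
have hco : co <= 1 by exact: cos_le1.
set D := (1 - (1 - l)) ^+ 2 + _.
have hD : l ^+ 2 <= D.
  rewrite /D; have -> : 1 - (1 - l) = l by ring.
  have : 0 <= 2 * (1 - l) * (1 - co) by apply: mulr_ge0; [lra|lra].
  lra.
have l2 : 0 < l ^+ 2 by exact: exprn_gt0.
have D0 : 0 < D by exact: lt_le_trans l2 hD.
have n0 : 0 <= 1 - (1 - l) ^+ 2 by nra.
apply/andP; split; first exact: divr_ge0 (ltW D0).
rewrite ler_pdivrMr // .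
have -> : 2 / l * D = 2 / l * (D - l ^+ 2) + 2 * l.
  by field; rewrite gt_eqF.
have : 0 <= 2 / l * (D - l ^+ 2) by apply: mulr_ge0; [apply: divr_ge0; lra| lra].
nra.
Qed.

Lemma pk_boundk (R : realType) (l c t : R) (k : nat) : 0 < l -> l <= 1 ->
  ~ circ_arc (c - 2 ^+ k * l / 2) (2 ^+ k * l) t ->
  poisson_kernel (1 - l) c t <= 8 / cos 1 ^+ 2 / l / (2 ^+ k) ^+ 2.
Proof.
move=> l0 l1 nI.
have c1 : 0 < cos 1 :> R := cos1_gt0 R.
have c1' : cos 1 <= 1 :> R := cos_le1 1.
have g0 : 0 < cos 1 ^+ 2 :> R by exact: exprn_gt0.
have g1 : cos 1 ^+ 2 <= 1 :> R by rewrite expr2; nra.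
have /andP[P0 P2] := @pk_bound0 R l c t l0 l1.
case: k nI => [|j] nI.
  rewrite expr0 expr1n divr1.
  apply: (le_trans P2); rewrite ler_pdivlMr // divfK ?gt_eqF //.
  rewrite ler_pdivlMr //; nra.
set L := 2 ^+ j.+1 * l.
have L0 : 0 < L by apply: mulr_gt0 => //; exact: exprn_gt0.
have L1 : L < 1.
  rewrite ltNge; apply/negP => hL; apply: nI; by rewrite arc_setT.
have hl : l < 1 / 2.
  have : 2 <= 2 ^+ j.+1 :> R.
    rewrite exprS -[X in X <= _]mulr1 ler_wpM2l //.
    by rewrite exprn_ege1 // ler1n.
  rewrite /L in L1; nra.
pose m := - Num.floor (t - c + 1 / 2).
set s := t - c + m%:~R.
have hs : - (1/2) <= s < 1 / 2.
  have h1 := floor_le (t - c + 1 / 2).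
  have h2 := floorD1_gt (t - c + 1 / 2).
  rewrite intrD in h2.
  rewrite /s /m intrN; apply/andP; split; lra.
have sL : L / 2 < `|s|.
  rewrite ltNge; apply/negP => hsL; apply: nI.
  exists m; move: hsL; rewrite ler_norml => /andP[h1 h2].
  rewrite /s in h1 h2; apply/andP; split; rewrite -/L; lra.
have sL2 : L ^+ 2 / 4 <= s ^+ 2.
  rewrite -(real_normK (num_real s)).
  have : 0 <= L / 2 by lra.
  nra.
have ecos : cos (2 * pi * (t - c)) = cos (2 * pi * s).
  rewrite /s -(@cos_addint R _ m); congr cos; ring.
have hcos := @one_sub_cos R (2 * pi * s).
have pi2 := pi_ge2 R.
have pi4 : pi < 4 :> R.
  by have := pihalf_lt2 R; rewrite ltr_pdivrMr // => /lt_le_trans; apply; rewrite -natrM.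
have hc : cos 1 ^+ 2 * s ^+ 2 <= 1 - cos (2 * pi * s).
  have h : cos 1 ^+ 2 / 16 * (2 * pi * s) ^+ 2 <= 1 - cos (2 * pi * s).
    apply: hcos; move: hs => /andP[h1 h2]; apply/andP; split; nra.
  apply: le_trans h.
  have -> : cos 1 ^+ 2 / 16 * (2 * pi * s) ^+ 2 = (cos 1 ^+ 2 * s ^+ 2) * (pi ^+ 2 / 4).
    by field.
  rewrite -[leLHS]mulr1; apply: ler_wpM2l.
    by apply: mulr_ge0; [exact: ltW|exact: sqr_ge0].
  rewrite ler_pdivlMr // mul1r expr2; nra.
move: P0; rewrite /poisson_kernel -pk_den; last lra.
rewrite ecos => P0.
set D := (1 - (1 - l)) ^+ 2 + _.
have hD : cos 1 ^+ 2 * (L ^+ 2 / 4) <= D.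
  rewrite /D; have -> : 1 - (1 - l) = l by ring.
  have h0 : 0 <= cos 1 ^+ 2 * s ^+ 2 by apply: mulr_ge0; [exact: ltW|exact: sqr_ge0].
  have : cos 1 ^+ 2 * (L ^+ 2 / 4) <= cos 1 ^+ 2 * s ^+ 2.
    by apply: ler_wpM2l => //; exact: ltW.
  have : 0 <= l ^+ 2 by exact: sqr_ge0.
  nra.
have X0 : 0 < cos 1 ^+ 2 * (L ^+ 2 / 4).
  by apply: mulr_gt0 => //; apply: divr_gt0 => //; exact: exprn_gt0.
have D0 : 0 < D by exact: lt_le_trans X0 hD.
have -> : 8 / cos 1 ^+ 2 / l / (2 ^+ j.+1) ^+ 2 = 2 * l / (cos 1 ^+ 2 * (L ^+ 2 / 4)).
  rewrite /L; field; rewrite !gt_eqF //; exact: exprn_gt0.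
have n0 : 0 <= 1 - (1 - l) ^+ 2 by nra.
have n1 : 1 - (1 - l) ^+ 2 <= 2 * l by nra.
apply: (@le_trans _ _ ((1 - (1 - l) ^+ 2) / (cos 1 ^+ 2 * (L ^+ 2 / 4)))).
  apply: ler_wpM2l => //; rewrite lef_pV2 //.
by apply: ler_wpM2r => //; rewrite invr_ge0; exact: ltW.
Qed.
Lemma pk_cont (R : realType) (r c : R) : 0 <= r < 1 ->
  continuous (poisson_kernel r c).
Proof.
move=> /andP[r0 r1] x; rewrite /poisson_kernel.
have gc : {for x, continuous (fun t : R => 1 - 2 * r * cos (2 * pi * (t - c)) + r ^+ 2)}.
  apply: continuousD; last exact: cst_continuous.
  apply: continuousD; first exact: cst_continuous.
  apply: continuousN.
  apply: continuousM; first exact: cst_continuous.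
  apply: continuous_comp; last exact: continuous_cos.
  apply: continuousM; first exact: cst_continuous.
  apply: continuousD; first exact: cvg_id.
  exact: cst_continuous.
apply: (@continuousM _ _ (cst (1 - r ^+ 2)) (fun t : R => (1 - 2 * r * cos (2 * pi * (t - c)) + r ^+ 2)^-1)).
  exact: cst_continuous.
apply: continuousV => //.
have := cos_le1 (2 * pi * (x - c)).
set co := cos _ => h.
rewrite gt_eqF //; nra.
Qed.

Lemma transition (Q : nat -> Prop) (K : nat) : ~ Q 0 -> Q K ->
  exists j, (j < K)%N /\ ~ Q j /\ Q j.+1.
Proof.
elim: K => [|K IH] h0 hK; first by [].
case: (pselect (Q K)) => hQ.
  have [j [jK [h1 h2]]] := IH h0 hQ.
  by exists j; split => //; rewrite ltnS ltnW.
by exists K; split.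
Qed.

Lemma geom_le (R : realType) (q : R) (N : nat) : 0 <= q < 1 ->
  \sum_(k < N) q ^+ k <= (1 - q)^-1.
Proof.
move=> /andP[q0 q1].
have e : (1 - q) * \sum_(k < N) q ^+ k = 1 - q ^+ N.
  elim: N => [|N IH]; first by rewrite big_ord0 expr0; ring.
  by rewrite big_ord_recr /= mulrDr IH exprS; ring.
have q1' : 0 < 1 - q by lra.
rewrite -(ler_pM2l q1') e mulfV ?gt_eqF //.
have : 0 <= q ^+ N by exact: exprn_ge0.
lra.
Qed.

Lemma single_le (n : nat) (R : realType) (F : 'I_n -> R) (i : 'I_n) :
  (forall k, 0 <= F k) -> F i <= \sum_(k < n) F k.
Proof.
move=> F0; rewrite (bigD1 i) //= lerDl; exact: sumr_ge0.
Qed.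

Theorem mainTheorem15 (R : realType) (eps : R) (heps0 : 0 < eps) (heps1 : eps < 1) :
  exists c : R, 0 < c /\
  forall mu : {finite_measure set R -> \bar R},
    mu (~` `[0, 1[) = 0%E ->
    (forall a l : R, 0 < l -> l <= 1 ->
       (mu (circ_arc2 a l) <= (2 * (1 + eps))%:E * mu (circ_arc a l))%E) ->
    forall a l : R, 0 < l -> l <= 1 ->
      ((c * l)%:E * poisson_at_zI mu a l <= mu (circ_arc a l))%E.
Proof.
have c1 : 0 < cos 1 :> R := cos1_gt0 R.
have c1' : cos 1 <= 1 :> R := cos_le1 1.
have g0 : 0 < cos 1 ^+ 2 :> R by exact: exprn_gt0.
have g1 : cos 1 ^+ 2 <= 1 :> R by rewrite expr2; nra.
pose M := 8 / cos 1 ^+ 2 : R.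
have M8 : 8 <= M by rewrite /M ler_pdivlMr //; nra.
have M0 : 0 < M by lra.
exists ((1 - eps) / (8 * M)); split.
  by apply: divr_gt0; lra.
move=> mu _ Hd a l l0 l1.
set c0 := a + l / 2.
pose Ik k := circ_arc (c0 - 2 ^+ k * l / 2) (2 ^+ k * l).
have I0 : Ik 0%N = circ_arc a l.
  by rewrite /Ik expr0 mul1r; congr circ_arc; rewrite /c0; ring.
have IS k : Ik k.+1 = circ_arc2 (c0 - 2 ^+ k * l / 2) (2 ^+ k * l).
  by rewrite /Ik /circ_arc2 exprS; congr circ_arc; ring.
have Imeas k : measurable (Ik k) by exact: arc_meas.
pose m k := fine (mu (Ik k)).
have mE k : mu (Ik k) = (m k)%:E by rewrite /m fineK // fin_num_measure.
have m0 k : 0 <= m k by rewrite /m fine_ge0.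
have epsq : 1 <= 2 * (1 + eps) by lra.
have dbl k : m k.+1 <= 2 * (1 + eps) * m k.
  have [h|h] := lerP (2 ^+ k * l) 1.
    have hp : 0 < 2 ^+ k * l by apply: mulr_gt0 => //; exact: exprn_gt0.
    have := Hd (c0 - 2 ^+ k * l / 2) _ hp h; rewrite -IS -/(Ik k) !mE -EFinM lee_fin //.
  have e1 : Ik k = setT by rewrite /Ik arc_setT //; exact: ltW.
  have e2 : Ik k.+1 = setT.
    rewrite /Ik arc_setT // exprS -mulrA.
    have : 0 <= 2 ^+ k * l by apply: mulr_ge0; [exact: exprn_ge0|exact: ltW].
    lra.
  rewrite /m e2 -e1 -/(m k).
  have := m0 k; nra.
have dblk k : m k <= (2 * (1 + eps)) ^+ k * m 0%N.
  elim: k => [|k IH]; first by rewrite expr0 mul1r.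
  apply: (le_trans (dbl k)); rewrite exprS -!mulrA; apply: ler_wpM2l => //; apply: ler_wpM2l => //; lra.
have [K hK] : exists K : nat, 1 <= 2 ^+ K * l.
  have hli : 0 <= l^-1 by rewrite invr_ge0; exact: ltW.
  have hb := archi_boundP hli.
  exists (Num.bound l^-1).
  have h2 : (Num.bound l^-1)%:R <= 2 ^+ (Num.bound l^-1) :> R.
    rewrite -natrX ler_nat; apply: ltnW; exact: ltn_expl.
  have : l^-1 <= 2 ^+ Num.bound l^-1 by apply: ltW; exact: lt_le_trans hb h2.
  by rewrite -ler_pdivrMr // div1r.
have IK : Ik K = setT by rewrite /Ik arc_setT.
pose coef k := 4 * M / l / (2 ^+ k) ^+ 2.
have coef0 k : 0 <= coef k.
  rewrite /coef; apply: divr_ge0; last exact: sqr_ge0.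
  by apply: divr_ge0; lra.
pose B t := \sum_(k < K.+1) coef k * \1_(Ik k) t.
have PB t : poisson_kernel (1 - l) c0 t <= B t.
  have /andP[P0 P2] := @pk_bound0 R l c0 t l0 l1.
  have B0 k : 0 <= coef k * \1_(Ik k) t.
    by apply: mulr_ge0 => //; rewrite indicE; case: (_ \in _).
  case: (pselect (Ik 0%N t)) => h0.
    apply: (le_trans P2).
    apply: (le_trans _ (@single_le K.+1 R (fun k : 'I_K.+1 => coef k * \1_(Ik k) t) ord0 (fun k => B0 k))).
    rewrite /= indicE mem_set // mulr1 /coef expr0 expr1n divr1.
    rewrite ler_pdivlMr // divfK ?gt_eqF //; lra.
  have hKt : Ik K t by rewrite IK.
  have [j [jK [hj1 hj2]]] := @transition (fun k => Ik k t) K h0 hKt.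
  have hjK : (j.+1 < K.+1)%N by [].
  apply: (le_trans _ (@single_le K.+1 R (fun k : 'I_K.+1 => coef k * \1_(Ik k) t) (Ordinal hjK) (fun k => B0 k))).
  rewrite /= indicE mem_set // mulr1.
  apply: (le_trans (@pk_boundk R l c0 t j l0 l1 hj1)).
  rewrite /coef /M [2 ^+ j.+1]exprS.
  suff -> : 4 * (8 / cos 1 ^+ 2) / l / (2 * 2 ^+ j) ^+ 2 = 8 / cos 1 ^+ 2 / l / (2 ^+ j) ^+ 2 by [].
  field; rewrite !gt_eqF //; exact: exprn_gt0.
have Pmeas : measurable_fun [set: R] (fun t : R => (poisson_kernel (1 - l) c0 t)%:E).
  apply/measurable_EFinP; apply: continuous_measurable_fun; apply: pk_cont.
  apply/andP; split; lra.
have fmeas (k : 'I_K.+1) : measurable_fun [set: R] (fun t : R => (coef k * \1_(Ik k) t)%:E).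
  apply/measurable_EFinP; apply: measurable_funM; first exact: measurable_cst.
  exact: measurable_indic.
have f0 (k : 'I_K.+1) t : setT t -> (0 <= (coef k * \1_(Ik k) t)%:E)%E.
  by move=> _; rewrite lee_fin; apply: mulr_ge0 => //; rewrite indicE; case: (_ \in _).
have int1 : (poisson_at_zI mu a l <=
    \int[mu]_t (\sum_(k < K.+1) (coef k * \1_(Ik k) t)%:E))%E.
  apply: ge0_le_integral => //.
  - move=> t _; rewrite lee_fin.
    by have /andP[] := @pk_bound0 R l c0 t l0 l1.
  - exact: emeasurable_sum.
  - by move=> t _; rewrite sumEFin lee_fin; exact: PB.
have int2 : (\int[mu]_t (\sum_(k < K.+1) (coef k * \1_(Ik k) t)%:E) =
    (\sum_(k < K.+1) coef k * m k)%:E)%E.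
  rewrite ge0_integral_sum //.
  rewrite -sumEFin; apply: eq_bigr => k _.
  rewrite (@integralZl_indic _ _ _ mu setT measurableT (fun _ => Ik k) (coef k)) //.
    rewrite integral_indic // setIT EFinM; have := mE k; move=> E; exact: (congr1 (fun x => ((coef k)%:E * x)%E) E).
  by move=> hk; exfalso; have := coef0 k; lra.
have q01 : 0 <= (1 + eps) / 2 < 1 by apply/andP; split; lra.
have S1 : \sum_(k < K.+1) coef k * m k <= 4 * M / l * m 0%N * (2 / (1 - eps)).
  apply: (@le_trans _ _ (\sum_(k < K.+1) (4 * M / l * m 0%N) * ((1 + eps) / 2) ^+ k)).
    apply: ler_sum => k _.
    apply: le_trans (ler_wpM2l (coef0 k) (dblk k)) _.
    rewrite /coef exprMn expr_div_n.
    suff -> : 4 * M / l / (2 ^+ k) ^+ 2 * (2 ^+ k * (1 + eps) ^+ k * m 0%N) =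
      4 * M / l * m 0%N * ((1 + eps) ^+ k / 2 ^+ k) by [].
    field; rewrite !gt_eqF //; exact: exprn_gt0.
  rewrite -mulr_sumr; apply: ler_wpM2l.
    by apply: mulr_ge0 => //; apply: divr_ge0; lra.
  apply: (le_trans (@geom_le R _ K.+1 q01)).
  suff -> : (1 - (1 + eps) / 2)^-1 = 2 / (1 - eps) by [].
  by field; lra.
have Pge0 : (0 <= poisson_at_zI mu a l)%E.
  apply: integral_ge0 => t _; rewrite lee_fin.
  by have /andP[] := @pk_bound0 R l c0 t l0 l1.
have cl0 : 0 <= (1 - eps) / (8 * M) * l.
  by apply: mulr_ge0; [apply: divr_ge0; lra | lra].
have E0 := mE 0%N; rewrite I0 in E0; rewrite E0.
apply: le_trans (lee_pmul _ Pge0 (lexx _) int1) _; first by rewrite lee_fin.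
rewrite int2 -EFinM lee_fin.
apply: le_trans (ler_wpM2l cl0 S1) _.
suff -> : (1 - eps) / (8 * M) * l * (4 * M / l * m 0%N * (2 / (1 - eps))) = m 0%N by [].
by field; rewrite !gt_eqF //; lra.
Qed.
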